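(* If a hypergraph $H$ is degenerate, then its suspension $S(H)$ is degenerate.
   Context: A hypergraph $H=(V,E)$ has finite vertex set $V$ and edge set $E\subseteq 2^V$; $R(H)=\{|F|:F\in E\}$. $H_1\subseteq H_2$ means there is an injective $f\colon V(H_1)\to V(H_2)$ with $f(F)\in E(H_2)$ for all $F\in E(H_1)$. For $G$ on $n$ vertices, $h_n(G)=\sum_{F\in E(G)}1/\binom{n}{|F|}$; $\pi_n(H)=\max\{h_n(G): G\text{ on } n \text{ vertices}, R(G)\subseteq R(H), H\not\subseteq G\}$ and $\pi(H)=\lim_n\pi_n(H)$. $H$ is degenerate if $\pi(H)=|R(H)|-1$. The suspension $S(H)$ has vertex set $V(H)\cup\{\ast\}$ for a new vertex $\ast$ and edge set $\{F\cup\{\ast\}: F\in E(H)\}$. *)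

(* Defs.v *)
From HB Require Import structures.
From mathcomp Require Import all_boot all_order all_algebra.
From mathcomp Require Import all_classical all_reals all_analysis.
Set Implicit Arguments. Unset Strict Implicit. Unset Printing Implicit Defensive.
Import Order.TTheory GRing.Theory Num.Theory.
Import numFieldNormedType.Exports.
Local Open Scope classical_set_scope.
Local Open Scope ring_scope.

Record hgraph := Hgraph { hv : nat; he : {set {set 'I_hv}} }.

Definition Rsizes (H : hgraph) : seq nat := undup [seq #|F| | F : {set 'I_(hv H)} in he H].

Definition contained (H : hgraph) (n : nat) (E : {set {set 'I_n}}) : Prop :=
  exists f : 'I_(hv H) -> 'I_n, injective f /\ forall F, F \in he H -> f @: F \in E.

Definition hn (R : realType) (n : nat) (E : {set {set 'I_n}}) : R :=
  \sum_(F in E) ('C(n, #|F|))%:R^-1.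

Definition admissible (H : hgraph) (n : nat) (E : {set {set 'I_n}}) : Prop :=
  (forall F, F \in E -> #|F| \in Rsizes H) /\ ~ contained H E.

(* pi_n(H): maximum of h_n over admissible G (0 if there is none; h_n >= 0). *)
Definition pin (R : realType) (H : hgraph) (n : nat) : R :=
  \big[Num.max/0]_(E : {set {set 'I_n}} | `[< admissible H E >]) hn R E.

Definition degenerate (R : realType) (H : hgraph) : Prop :=
  (fun n => pin R H n) @ \oo --> ((size (Rsizes H))%:R - 1 : R).

Definition suspension (H : hgraph) : hgraph :=
  @Hgraph (hv H).+1
    [set ord_max |: (widen_ord (leqnSn (hv H)) @: F) | F : {set 'I_(hv H)} in he H].

(* Main.v *)
Require Import Defs.
From mathcomp Require Import all_boot all_order all_algebra.
From mathcomp Require Import all_classical all_reals all_analysis.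
From mathcomp Require Import ring lra.
Import Order.TTheory GRing.Theory Num.Theory.
Import numFieldNormedType.Exports.
Set Implicit Arguments. Unset Strict Implicit. Unset Printing Implicit Defensive.
Local Open Scope ring_scope.

Lemma card_susp (k : nat) (F : {set 'I_k}) :
  #|ord_max |: (widen_ord (leqnSn k) @: F)| = #|F|.+1.
Proof.
rewrite cardsU1 card_imset; last by by move=> a b /(congr1 val) /= /val_inj.
suff -> : ord_max \notin widen_ord (leqnSn k) @: F by [].
apply/imsetP => -[j _ /(congr1 val) /= E].
by move: (ltn_ord j); rewrite -E ltnn.
Qed.

Lemma mem_Rsizes_susp (H : hgraph) x :
  (x \in Rsizes (suspension H)) = (x \in map succn (Rsizes H)).
Proof.
rewrite /Rsizes mem_undup.
apply/idP/idP.
  case/fintype.imageP => F2 HF2 ->.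
  move: HF2 => /imsetP [F HF ->]; rewrite card_susp.
  apply/mapP; exists #|F| => //; rewrite mem_undup; apply/fintype.imageP; by exists F.
case/mapP => k; rewrite mem_undup; case/fintype.imageP => F HF -> ->.
apply/fintype.imageP; exists (ord_max |: (widen_ord (leqnSn (hv H)) @: F)); last by rewrite card_susp.
by apply/imsetP; exists F.
Qed.

Lemma size_Rsizes_susp (H : hgraph) :
  size (Rsizes (suspension H)) = size (Rsizes H).
Proof.
rewrite -(size_map succn (Rsizes H)); apply: perm_size; apply: uniq_perm.
- exact: undup_uniq.
- rewrite map_inj_uniq; [exact: undup_uniq | exact: succn_inj].
- exact: mem_Rsizes_susp.
Qed.
Definition phi n (v : 'I_n.+1) (F : {set 'I_n}) : {set 'I_n.+1} := v |: (lift v @: F).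
Definition link n (v : 'I_n.+1) (E : {set {set 'I_n.+1}}) : {set {set 'I_n}} :=
  [set F | phi v F \in E].

Lemma card_phi n (v : 'I_n.+1) F : #|phi v F| = #|F|.+1.
Proof.
rewrite /phi cardsU1 card_imset; last exact: lift_inj.
suff -> : v \notin lift v @: F by [].
by apply/imsetP => -[j _ E]; move: (neq_lift v j); rewrite -E eqxx.
Qed.

Lemma phiK n (v : 'I_n.+1) F : lift v @^-1: phi v F = F.
Proof.
apply/setP => j; rewrite !inE eq_sym (negbTE (neq_lift v j)) /=.
by rewrite (mem_imset _ _ (@lift_inj _ v)).
Qed.

Lemma phi_inj n (v : 'I_n.+1) : injective (phi v).
Proof. by move=> A B E; rewrite -(phiK v A) E phiK. Qed.

Lemma img_link n (v : 'I_n.+1) E :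
  phi v @: link v E = [set F in E | v \in F].
Proof.
apply/setP => F; rewrite !inE; apply/imsetP/andP.
  by case=> G; rewrite inE => HG ->; split => //; rewrite /phi setU11.
case=> HF vF.
have EF : F = phi v (lift v @^-1: F).
  apply/setP => u; rewrite /phi !inE.
  case: (unliftP v u) => [j ->|->]; last by rewrite eqxx vF.
  by rewrite eq_sym (negbTE (neq_lift v j)) (mem_imset _ _ (@lift_inj _ v)) inE.
by exists (lift v @^-1: F); rewrite // inE -EF.
Qed.

Lemma hn_link (R : realType) n (v : 'I_n.+1) E :
  hn R (link v E) = \sum_(F in E | v \in F) ('C(n, #|F|.-1))%:R^-1.
Proof.
rewrite /hn.
rewrite (eq_bigl (fun F => F \in [set F in E | v \in F])); last by move=> F; rewrite !inE.
rewrite -img_link big_imset /=; last by move=> A B _ _; apply: phi_inj.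
by apply: eq_bigr => F _; rewrite card_phi.
Qed.

Lemma sum_link (R : realType) n E :
  \sum_(v : 'I_n.+1) hn R (link v E) =
  \sum_(F in E) (#|F|%:R * ('C(n, #|F|.-1))%:R^-1 : R).
Proof.
under eq_bigr do rewrite hn_link.
rewrite (exchange_big_dep (fun F => F \in E)) /=; last by move=> ? ? _ /andP[].
apply: eq_bigr => F HF.
rewrite (eq_bigl (fun v => v \in F)); last by move=> v; rewrite HF.
rewrite sumr_const mulr_natl; congr (_ *+ _).
Qed.

Lemma bin_id (R : realType) n k : (0 < k <= n.+1)%N ->
  (k%:R * ('C(n, k.-1))%:R^-1 : R) = n.+1%:R * ('C(n.+1, k))%:R^-1.
Proof.
case: k => // m /= Hm.
have h1 : ('C(n, m))%:R != 0 :> R by rewrite pnatr_eq0 -lt0n bin_gt0.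
have h2 : ('C(n.+1, m.+1))%:R != 0 :> R by rewrite pnatr_eq0 -lt0n bin_gt0.
have E := mul_bin_diag n.+1 m; rewrite /= in E.
apply/eqP; rewrite eq_sym -subr_eq0.
have -> : n.+1%:R * ('C(n.+1, m.+1))%:R^-1 - m.+1%:R * ('C(n, m))%:R^-1
  = ((n.+1 * 'C(n, m))%:R - (m.+1 * 'C(n.+1, m.+1))%:R) / (('C(n.+1, m.+1))%:R * ('C(n, m))%:R) :> R.
  rewrite !natrM; field; by rewrite h1 h2.
by rewrite E subrr mul0r.
Qed.

Lemma double (R : realType) n (E : {set {set 'I_n.+1}}) :
  (forall F, F \in E -> (0 < #|F|)%N) ->
  \sum_(v : 'I_n.+1) hn R (link v E) = n.+1%:R * hn R E.
Proof.
move=> H0; rewrite sum_link /hn mulr_sumr; apply: eq_bigr => F HF.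
apply: bin_id; rewrite H0 //=.
by have := max_card F; rewrite card_ord.
Qed.

Definition gext (k n : nat) (v : 'I_n.+1) (f : 'I_k -> 'I_n) (i : 'I_k.+1) : 'I_n.+1 :=
  if (insub (val i) : option 'I_k) is Some j then lift v (f j) else v.

Lemma gext_w k n v (f : 'I_k -> 'I_n) j : gext v f (widen_ord (leqnSn k) j) = lift v (f j).
Proof.
rewrite /gext; case: insubP => [u _ Hu|]; last by rewrite /= ltn_ord.
by congr (lift v (f _)); apply: val_inj.
Qed.

Lemma gext_max k n v (f : 'I_k -> 'I_n) : gext v f ord_max = v.
Proof. by rewrite /gext; case: insubP => [u /=|//]; rewrite ltnn. Qed.

Lemma gext_inj k n v (f : 'I_k -> 'I_n) : injective f -> injective (gext v f).
Proof.
move=> fi i1 i2; rewrite /gext.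
case: insubP => [u1 _ H1|H1]; case: insubP => [u2 _ H2|H2].
- by move/lift_inj/fi => E; apply: val_inj; rewrite -H1 -H2 E.
- by move=> E; move: (neq_lift v (f u1)); rewrite E eqxx.
- by move=> E; move: (neq_lift v (f u2)); rewrite -E eqxx.
- move=> _; apply: val_inj; move: (ltn_ord i1) (ltn_ord i2) H1 H2.
  rewrite /= !ltnS -!leqNgt => a b c d; apply/eqP; rewrite eqn_leq.
  by rewrite (leq_trans a d) (leq_trans b c).
Qed.

Lemma link_adm (H : hgraph) n (E : {set {set 'I_n.+1}}) v :
  admissible (suspension H) E -> admissible H (link v E).
Proof.
case=> Hs Hc; split.
  move=> F; rewrite inE => /Hs; rewrite mem_Rsizes_susp card_phi.
  by rewrite (mem_map succn_inj).
case=> f [fi fE]; apply: Hc; exists (gext v f); split; first exact: gext_inj.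
move=> F2 /imsetP [F HF ->].
have := fE F HF; rewrite inE; congr (_ \in E).
rewrite imsetU1 gext_max /phi; congr (_ |: _).
rewrite -imset_comp -imset_comp; apply: eq_imset => j /=.
by rewrite gext_w.
Qed.

Lemma hn_ge0 (R : realType) n (E : {set {set 'I_n}}) : 0 <= hn R E.
Proof. by apply: sumr_ge0 => F _; rewrite invr_ge0 ler0n. Qed.

Lemma pin_ge0 (R : realType) H n : 0 <= pin R H n.
Proof.
rewrite /pin; elim/big_ind: _ => //.
  by move=> x y hx hy; rewrite le_max hx.
move=> E _; exact: hn_ge0.
Qed.

Lemma pin_ge (R : realType) H n (E : {set {set 'I_n}}) :
  admissible H E -> hn R E <= pin R H n.
Proof.
move=> HE; rewrite /pin.
apply: le_bigmax_cond.
by apply/asboolP.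
Qed.

Lemma pin_upper (R : realType) H n :
  pin R (suspension H) n.+1 <= pin R H n.
Proof.
rewrite {1}/pin; apply: bigmax_le; first exact: pin_ge0.
move=> E /asboolP HE.
have H0 : forall F, F \in E -> (0 < #|F|)%N.
  move=> F /(proj1 HE); rewrite mem_Rsizes_susp => /mapP [k _ ->] //.
have hpos : (0 : R) < n.+1%:R by rewrite ltr0n.
rewrite -(ler_pM2l hpos) -double //.
apply: (@le_trans _ _ (\sum_(v < n.+1) pin R H n)).
  apply: ler_sum => v _; apply: pin_ge; exact: link_adm.
by rewrite sumr_const card_ord mulr_natl.
Qed.

Lemma hn_levels (R : realType) m (s : seq nat) : uniq s -> (forall k, k \in s -> k <= m)%N ->
  hn R [set F : {set 'I_m} | #|F| \in s] = (size s)%:R.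
Proof.
elim: s => [|a s IH] /=.
  move=> _ _; rewrite /hn big1 // => F; by rewrite inE in_nil.
case/andP => aS us Hle.
rewrite /hn (bigID (fun F : {set 'I_m} => #|F| == a)) /=.
have -> : \sum_(F in [set F : {set 'I_m} | #|F| \in a :: s] | #|F| != a) ('C(m, #|F|))%:R^-1
   = hn R [set F : {set 'I_m} | #|F| \in s] :> R.
  rewrite /hn; apply: eq_bigl => F; rewrite !inE.
  by case: eqP => [->|]; rewrite ?(negbTE aS) //= andbT.
rewrite IH //; last by move=> k ks; apply: Hle; rewrite inE ks orbT.
rewrite (eq_bigl (fun F => F \in [set F : {set 'I_m} | #|F| == a])); last first.
  by move=> F; rewrite !inE; case: eqP => [->|]; rewrite ?eqxx ?andbF ?andbT.
rewrite (eq_bigr (fun _ => ('C(m, a))%:R^-1)); last by move=> F; rewrite inE => /eqP ->.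
rewrite sumr_const card_draws card_ord.
have hc : ('C(m, a))%:R != 0 :> R.
  by rewrite pnatr_eq0 -lt0n bin_gt0 Hle // inE eqxx.
have -> : ('C(m, a))%:R^-1 *+ 'C(m, a) = 1 :> R by rewrite -(mulr_natr (('C(m, a))%:R^-1 : R)) mulVf.
by rewrite -nat1r.
Qed.

Lemma Rsizes_bound (H : hgraph) k : k \in Rsizes H -> (k <= hv H)%N.
Proof.
rewrite /Rsizes mem_undup; case/fintype.imageP => F _ ->.
by have := max_card F; rewrite card_ord.
Qed.

Lemma Rsizes_ex (H : hgraph) k : k \in Rsizes H -> exists2 F, F \in he H & #|F| = k.
Proof. by rewrite /Rsizes mem_undup; case/fintype.imageP => F HF ->; exists F. Qed.

Lemma pin_lower (R : realType) H m : (hv H < m)%N ->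
  (size (Rsizes (suspension H)))%:R - 1 <= pin R (suspension H) m.
Proof.
move=> Hm.
have Hb : forall k, k \in Rsizes (suspension H) -> (k <= m)%N.
  by move=> k /Rsizes_bound /= hk; apply: leq_trans hk Hm.
have U := undup_uniq [seq #|F| | F : {set 'I_(hv (suspension H))} in he (suspension H)].
have := pin_ge0 R (suspension H) m.
rewrite -/(Rsizes _) in U.
case E: (Rsizes (suspension H)) Hb U => [|k t] Hb U /=.
  by move=> h; lra.
move=> _.
have Hadm : admissible (suspension H) [set F : {set 'I_m} | #|F| \in t]; last first.
  apply: le_trans (pin_ge R Hadm).
  rewrite hn_levels.
  - by rewrite -nat1r; lra.
  - by case/andP: U.
  - by move=> x xt; apply: Hb; rewrite inE xt orbT.
split.
  by move=> F; rewrite inE => Ft; rewrite E inE Ft orbT.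
case=> f [fi fE].
have : k \in Rsizes (suspension H) by rewrite E inE eqxx.
case/Rsizes_ex => F2 HF2 cF2.
have := fE F2 HF2; rewrite inE card_imset // cF2.
by case/andP: U => /negbTE ->.
Qed.

Theorem mainTheorem18 (R : realType) (H : hgraph) :
  degenerate R H -> degenerate R (suspension H).
Proof.
rewrite /degenerate size_Rsizes_susp => hyp.
suff: ([sequence pin R (suspension H) n.+1]_n @ \oo --> ((size (Rsizes H))%:R - 1 : R))%classic.
  by rewrite cvg_shiftS.
apply: (squeeze_cvgr _ (cvg_cst ((size (Rsizes H))%:R - 1 : R)) hyp).
near=> n.
have hn : (hv H < n.+1)%N by near: n; exists (hv H).
apply/andP; split.
  by rewrite -size_Rsizes_susp; apply: pin_lower.
exact: pin_upper.
Unshelve. all: by end_near.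
Qed.
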